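(* Let $\mathcal{M}\subseteq\mathbb{S}^n$ be a finite union of compact sets, $\mathcal{M}=\bigcup_{i=1}^k\mathcal{M}_i$. Suppose that for all nonzero $X\in\mathbb{S}^n_+$ and all $i\in\{1,\dots,k\}$, if $\langle M_i,X\rangle=0$ for some $M_i\in\mathcal{M}_i$, then $\langle M,X\rangle>0$ for all $M\in\mathcal{M}\setminus\mathcal{M}_i$. Then $\mathcal{S}(\mathcal{M})$ is rank-one generated if and only if $\mathcal{S}(\mathcal{M}_i)$ is rank-one generated for all $i\in\{1,\dots,k\}$.
   Context: $\mathbb{S}^n$ denotes real symmetric $n\times n$ matrices with $\langle A,B\rangle=\mathrm{tr}(AB)$, $\mathbb{S}^n_+$ the PSD cone. For $\mathcal{M}\subseteq\mathbb{S}^n$, $\mathcal{S}(\mathcal{M})=\{X\in\mathbb{S}^n_+:\langle M,X\rangle\ge0\ \forall M\in\mathcal{M}\}$. A closed convex cone $\mathcal{S}\subseteq\mathbb{S}^n_+$ is rank-one generated (ROG) if $\mathcal{S}=\mathrm{conv}(\mathcal{S}\cap\{xx^\top:x\in\mathbb{R}^n\})$. *)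

(* Defs.v *)
From HB Require Import structures.
From mathcomp Require Import all_boot all_order all_algebra.
From mathcomp Require Import all_classical all_reals all_analysis.
Set Implicit Arguments. Unset Strict Implicit. Unset Printing Implicit Defensive.
Import Order.TTheory GRing.Theory Num.Theory.
Local Open Scope ring_scope.
Local Open Scope classical_set_scope.

Definition symmx (R : realType) (n : nat) (A : 'M[R]_n) : Prop := A^T = A.

Definition psd (R : realType) (n : nat) (X : 'M[R]_n) : Prop :=
  symmx X /\ forall x : 'cV[R]_n, 0 <= (x^T *m X *m x) 0 0.

Definition mxip (R : realType) (n : nat) (A B : 'M[R]_n) : R := \tr (A *m B).

Definition SM (R : realType) (n : nat) (M : set 'M[R]_n) : set 'M[R]_n :=
  [set X | psd X /\ forall A, M A -> 0 <= mxip A X].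

Definition rank1 (R : realType) (n : nat) : set 'M[R]_n :=
  [set X | exists x : 'cV[R]_n, X = x *m x^T].

Definition conv (R : realType) (n : nat) (A : set 'M[R]_n) : set 'M[R]_n :=
  [set X | exists (m : nat) (w : 'I_m -> R) (Y : 'I_m -> 'M[R]_n),
     (forall i, 0 <= w i) /\ \sum_(i < m) w i = 1 /\ (forall i, A (Y i)) /\
     X = \sum_(i < m) w i *: Y i].

Definition ROG (R : realType) (n : nat) (S : set 'M[R]_n) : Prop :=
  S = conv (S `&` @rank1 R n).

(* Main.v *)
Require Import Defs.
From HB Require Import structures.
From mathcomp Require Import all_boot all_order all_algebra.
From mathcomp Require Import all_classical all_reals all_analysis.
From mathcomp Require Import ring lra.
Import Order.TTheory GRing.Theory Num.Theory numFieldNormedType.Exports.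
Local Open Scope ring_scope.
Local Open Scope classical_set_scope.
Set Implicit Arguments. Unset Strict Implicit. Unset Printing Implicit Defensive.

Section Basics.
Variables (R : realType) (n : nat).
Implicit Types (X Y A : 'M[R]_n) (x v : 'cV[R]_n).
Implicit Types (N : set 'M[R]_n).

Definition rk v : 'M[R]_n := v *m v^T.

Lemma trD X Y : (X + Y)^T = X^T + Y^T.
Proof. by apply/matrixP => i j; rewrite !mxE. Qed.
Lemma trZ (a : R) X : (a *: X)^T = a *: X^T.
Proof. by apply/matrixP => i j; rewrite !mxE. Qed.

Lemma qfD x X Y : (x^T *m (X + Y) *m x) 0 0 = (x^T *m X *m x) 0 0 + (x^T *m Y *m x) 0 0.
Proof. by rewrite mulmxDr mulmxDl mxE. Qed.
Lemma qfZ x (a : R) X : (x^T *m (a *: X) *m x) 0 0 = a * (x^T *m X *m x) 0 0.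
Proof. by rewrite -scalemxAr -scalemxAl mxE. Qed.

Lemma psd_add X Y : psd X -> psd Y -> psd (X + Y).
Proof.
move=> [sX pX] [sY pY]; split; first by rewrite /symmx trD sX sY.
by move=> x; rewrite qfD addr_ge0.
Qed.

Lemma psd_scale (a : R) X : 0 <= a -> psd X -> psd (a *: X).
Proof.
move=> a0 [sX pX]; split; first by rewrite /symmx trZ sX.
by move=> x; rewrite qfZ mulr_ge0.
Qed.

Lemma psd0 : psd (0 : 'M[R]_n).
Proof. by split; [rewrite /symmx trmx0 | move=> x; rewrite mulmx0 mul0mx mxE]. Qed.

Lemma psd_rk v : psd (rk v).
Proof.
split; first by rewrite /symmx /rk trmx_mul trmxK.
move=> x; rewrite /rk mulmxA -mulmxA.
have -> : v^T *m x = (x^T *m v)^T by rewrite trmx_mul trmxK.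
rewrite mxE big_ord1 [X in _ * X]mxE.
by rewrite -expr2 sqr_ge0.
Qed.

Lemma psd_sum (s : seq 'cV[R]_n) : psd (\sum_(v <- s) rk v).
Proof.
elim: s => [|v s IH]; first by rewrite big_nil; exact: psd0.
by rewrite big_cons; apply: psd_add => //; exact: psd_rk.
Qed.

Lemma mxipD A X Y : mxip A (X + Y) = mxip A X + mxip A Y.
Proof. by rewrite /mxip mulmxDr mxtraceD. Qed.
Lemma mxipZ A (a : R) X : mxip A (a *: X) = a * mxip A X.
Proof. by rewrite /mxip -scalemxAr mxtraceZ. Qed.
Lemma mxip0 A : mxip A 0 = 0.
Proof. by rewrite /mxip mulmx0 mxtrace0. Qed.
Lemma mxipB A X Y : mxip A (X - Y) = mxip A X - mxip A Y.
Proof. by rewrite /mxip mulmxBr raddfB. Qed.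

Lemma SM_add N X Y : SM N X -> SM N Y -> SM N (X + Y).
Proof.
move=> [pX cX] [pY cY]; split; first exact: psd_add.
by move=> A NA; rewrite mxipD addr_ge0 // ?cX ?cY.
Qed.

Lemma SM_scale N (a : R) X : 0 <= a -> SM N X -> SM N (a *: X).
Proof.
move=> a0 [pX cX]; split; first exact: psd_scale.
by move=> A NA; rewrite mxipZ mulr_ge0 // cX.
Qed.

Lemma SM0 N : SM N 0.
Proof. by split; [exact: psd0 | move=> A _; rewrite mxip0]. Qed.

Lemma SM_mono (N1 N2 : set 'M[R]_n) : N1 `<=` N2 -> SM N2 `<=` SM N1.
Proof. by move=> sub X [pX cX]; split => // A /sub; apply: cX. Qed.

Lemma rkZ (a : R) v : rk (a *: v) = (a * a) *: rk v.
Proof. by rewrite /rk linearZ /= -scalemxAl -scalemxAr scalerA. Qed.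

Definition Kgen (N : set 'M[R]_n) X := exists s : seq 'cV[R]_n,
  (forall v, v \in s -> SM N (rk v)) /\ X = \sum_(v <- s) rk v.

Lemma Kgen0 N : Kgen N 0.
Proof. by exists [::]; split => //; rewrite big_nil. Qed.

Lemma Kgen_add N X Y : Kgen N X -> Kgen N Y -> Kgen N (X + Y).
Proof.
move=> [s [hs ->]] [t [ht ->]]; exists (s ++ t); split; last by rewrite big_cat.
by move=> v; rewrite mem_cat => /orP [] ?; [apply: hs | apply: ht].
Qed.

Lemma Kgen_scale N (a : R) X : 0 <= a -> Kgen N X -> Kgen N (a *: X).
Proof.
move=> a0 [s [hs ->]]; exists [seq Num.sqrt a *: v | v <- s]; split.
  move=> w /mapP [v vs ->]; rewrite rkZ; apply: SM_scale; last exact: hs.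
  by rewrite mulr_ge0 // sqrtr_ge0.
rewrite big_map scaler_sumr; apply: eq_bigr => v _.
by rewrite rkZ -expr2 sqr_sqrtr.
Qed.

Lemma Kgen_mono (N1 N2 : set 'M[R]_n) : N1 `<=` N2 -> Kgen N2 `<=` Kgen N1.
Proof.
move=> sub X [s [hs ->]]; exists s; split => // v /hs; exact: SM_mono.
Qed.

Lemma Kgen_SM N X : Kgen N X -> SM N X.
Proof.
move=> [s [hs ->]]; elim: s hs => [|v s IH] hs; first by rewrite big_nil; exact: SM0.
rewrite big_cons; apply: SM_add; first by apply: hs; rewrite mem_head.
by apply: IH => w ws; apply: hs; rewrite in_cons ws orbT.
Qed.

End Basics.

Section Conv.
Variables (R : realType) (n : nat).
Implicit Types (X Y A : 'M[R]_n) (x v : 'cV[R]_n).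
Implicit Types (N : set 'M[R]_n).

Lemma Kgen1 N v : SM N (rk v) -> Kgen N (rk v).
Proof.
by move=> h; exists [:: v]; split; [move=> w; rewrite inE => /eqP -> | rewrite big_seq1].
Qed.

Lemma conv_Kgen N X : Defs.conv (SM N `&` @rank1 R n) X -> Kgen N X.
Proof.
move=> [m [w [Y [w0 [_ [hY ->]]]]]].
apply: (big_ind (Kgen N)); [exact: Kgen0 | exact: Kgen_add|].
move=> i _; apply: Kgen_scale => //.
have [hS [y hy]] := hY i.
by rewrite hy; apply: Kgen1; rewrite /rk -hy.
Qed.

Lemma conv_SM N X : Defs.conv (SM N `&` @rank1 R n) X -> SM N X.
Proof. by move=> /conv_Kgen /Kgen_SM. Qed.

Lemma Kgen_conv N X : Kgen N X -> Defs.conv (SM N `&` @rank1 R n) X.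
Proof.
move=> [s [hs ->]].
case: s hs => [|v0 s'] hs.
  exists 1%N, (fun _ => 1), (fun _ => 0); split => //; split; first by rewrite big_ord1.
  split; last by rewrite big_nil big_ord1 scaler0.
  move=> _; split; first exact: SM0.
  by exists 0; rewrite mul0mx.
set s := v0 :: s'.
have m0 : (0 < (size s)%:R :> R) by rewrite ltr0n.
exists (size s), (fun _ => ((size s)%:R)^-1),
  (fun i => (size s)%:R *: rk (nth 0 s i)); split.
  by move=> _; rewrite invr_ge0 ltW.
split; first by rewrite sumr_const card_ord -[_ *+ _]mulr_natr mulVf // gt_eqF.
split.
  move=> i; split.
    apply: SM_scale; first exact: ltW.
    by apply: hs; rewrite mem_nth.
  exists (Num.sqrt (size s)%:R *: nth 0 s i).
  by rewrite -/(rk _) rkZ -expr2 sqr_sqrtr // ltW.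
rewrite (big_nth 0) big_mkord; apply: eq_bigr => i _.
by rewrite scalerA mulVf ?scale1r // gt_eqF.
Qed.

End Conv.

Section Decomp.
Variables (R : realType) (n : nat).
Implicit Types (X Y A : 'M[R]_n) (x y v : 'cV[R]_n).

Lemma trDg m p (A B : 'M[R]_(m, p)) : (A + B)^T = A^T + B^T.
Proof. by apply/matrixP => i j; rewrite !mxE. Qed.
Lemma trZg m p (a : R) (A : 'M[R]_(m, p)) : (a *: A)^T = a *: A^T.
Proof. by apply/matrixP => i j; rewrite !mxE. Qed.

Definition bil X x y : R := (x^T *m X *m y) 0 0.
Definition ev (i : 'I_n) : 'cV[R]_n := delta_mx i 0.

Lemma bilDl X x1 x2 y : bil X (x1 + x2) y = bil X x1 y + bil X x2 y.
Proof. by rewrite /bil trDg mulmxDl mulmxDl mxE. Qed.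
Lemma bilDr X x y1 y2 : bil X x (y1 + y2) = bil X x y1 + bil X x y2.
Proof. by rewrite /bil mulmxDr mxE. Qed.
Lemma bilZl X (a : R) x y : bil X (a *: x) y = a * bil X x y.
Proof. by rewrite /bil trZg -!scalemxAl mxE. Qed.
Lemma bilZr X (a : R) x y : bil X x (a *: y) = a * bil X x y.
Proof. by rewrite /bil -scalemxAr mxE. Qed.
Lemma bilDm X1 X2 x y : bil (X1 + X2) x y = bil X1 x y + bil X2 x y.
Proof. by rewrite /bil mulmxDr mulmxDl mxE. Qed.
Lemma bilZm (a : R) X x y : bil (a *: X) x y = a * bil X x y.
Proof. by rewrite /bil -scalemxAr -scalemxAl mxE. Qed.
Lemma bilNm X x y : bil (- X) x y = - bil X x y.
Proof. by rewrite -scaleN1r bilZm mulN1r. Qed.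

Lemma bil_sym X x y : symmx X -> bil X x y = bil X y x.
Proof.
move=> sX; rewrite /bil.
have h (B : 'M[R]_1) : B 0 0 = B^T 0 0 by rewrite mxE.
by rewrite h !trmx_mul trmxK sX mulmxA.
Qed.

Lemma bil_ev X i j : bil X (ev i) (ev j) = X i j.
Proof. by rewrite /bil /ev trmx_delta -rowE -colE !mxE. Qed.

Lemma bil_rk c x y : bil (c *m c^T) x y = bil 1%:M x c * bil 1%:M c y.
Proof.
rewrite /bil !mulmx1 mulmxA -mulmxA mxE big_ord1.
done.
Qed.

Lemma psd_diag X i : psd X -> 0 <= X i i.
Proof. by move=> [_ pX]; rewrite -bil_ev; apply: pX. Qed.

Lemma psd_diag0 X i j : psd X -> X i i = 0 -> X i j = 0.
Proof.
move=> [sX pX] Xii; apply/eqP; apply/negP => /negP nz.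
have Xji : X j i = X i j by rewrite -!bil_ev bil_sym.
pose a := - (X j j + 1) / (2 * X i j).
have := pX (a *: ev i + ev j); rewrite -/(bil X _ _).
rewrite bilDl !bilDr !bilZl !bilZr !bil_ev Xii Xji.
have h : a * X i j = - (X j j + 1) / 2.
  by rewrite /a; field; exact: nz.
rewrite h; lra.
Qed.

Lemma bil1l X x i : symmx X -> bil 1%:M x (X *m ev i) = bil X (ev i) x.
Proof. by move=> sX; rewrite /bil mulmx1 mulmxA -/(bil X x (ev i)) bil_sym. Qed.
Lemma bil1r X x i : symmx X -> bil 1%:M (X *m ev i) x = bil X (ev i) x.
Proof. by move=> sX; rewrite /bil mulmx1 trmx_mul sX. Qed.

Lemma psd_schur X i : psd X -> 0 < X i i ->
  psd (X - (X i i)^-1 *: ((X *m ev i) *m (X *m ev i)^T)).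
Proof.
move=> [sX pX] d0; split.
  by rewrite /symmx linearB /= linearZ /= trmx_mul trmxK sX.
move=> x; rewrite -/(bil _ _ _) bilDm bilNm bilZm bil_rk bil1l // bil1r //.
set b := bil X (ev i) x; set d := X i i.
have := pX (x + (- (b / d)) *: ev i); rewrite -/(bil _ _ _).
rewrite bilDl !bilDr !bilZl !bilZr bil_ev -/d (bil_sym x (ev i) sX) -/b.
have hd : d != 0 by rewrite gt_eqF.
set Q := bil X x x => h.
have -> : Q - d^-1 * (b * b) = Q + - (b / d) * b + (- (b / d) * b + - (b / d) * (- (b / d) * d)).
  by field.
exact: h.
Qed.

Lemma psd_diag_all0 X : psd X -> (forall j, X j j = 0) -> X = 0.
Proof.
move=> pX h; apply/matrixP => i j; rewrite mxE.
exact: psd_diag0 (h i).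
Qed.

Lemma schur_diag X i j : symmx X ->
  (X - (X i i)^-1 *: ((X *m ev i) *m (X *m ev i)^T)) j j
  = X j j - (X i i)^-1 * (X i j * X i j).
Proof.
move=> sX; rewrite -[LHS]bil_ev bilDm bilNm bilZm bil_rk bil1l // bil1r //.
by rewrite !bil_ev.
Qed.

Definition nzd X : {set 'I_n} := finset (fun j => X j j != 0).

Lemma psd_decomp X : psd X -> exists s : seq 'cV[R]_n, X = \sum_(v <- s) rk v.
Proof.
move=> pX.
have [m hm] : exists m, leq #|nzd X| m by exists #|nzd X|.
elim: m X pX hm => [|m IH] X pX hm.
  exists [::]; rewrite big_nil; apply: psd_diag_all0 => // j.
  apply/eqP; apply/negP => /negP nz.
  have : j \in nzd X by rewrite finset.in_set.
  move=> jin; move: hm; rewrite leqn0 => /eqP hm; have S0 := cards0_eq hm.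
  by rewrite S0 finset.in_set0 in jin.
case: (pselect (forall j, X j j = 0)) => [h|].
  by exists [::]; rewrite big_nil; apply: psd_diag_all0.
move=> /existsNP [i /eqP nzi].
have d0 : 0 < X i i by rewrite lt_def nzi psd_diag.
have sX : symmx X by case: pX.
set c := X *m ev i.
set X' := X - (X i i)^-1 *: (c *m c^T).
have pX' : psd X' by apply: psd_schur.
have sub : nzd X' \subset nzd X :\ i.
  apply/fintype.subsetP => j; rewrite in_setD1 !finset.in_set /X' schur_diag //.
  have [->|nij] := eqVneq j i.
    by rewrite mulrA mulVf ?mul1r ?subrr ?eqxx // gt_eqF.
  rewrite /=; apply: contraNN => /eqP Xjj.
  have Xij : X i j = 0.
    have -> : X i j = X j i by rewrite -!bil_ev bil_sym.
    exact: psd_diag0.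
  by rewrite Xjj Xij mulr0 mulr0 subr0.
have hc : (#|nzd X'| <= m)%N.
  move: (subset_leq_card sub); rewrite (cardsD1 i (nzd X)) finset.in_set nzi /= add1n in hm.
  by move=> h; apply: leq_trans h _; rewrite -ltnS.
have [s hs] := IH X' pX' hc.
exists ((Num.sqrt (X i i))^-1 *: c :: s).
rewrite big_cons -hs rkZ -invfM -expr2 sqr_sqrtr ?ltW // /X' /rk.
by rewrite addrC subrK.
Qed.

End Decomp.

Section LS.
Variables (R : realType) (n : nat).
Implicit Types (X Y A D : 'M[R]_n) (x y v : 'cV[R]_n).
Implicit Types (N : set 'M[R]_n).

Lemma cont_sum (I : Type) (r : seq I) (f : I -> 'M[R]_n -> R) :
  (forall i, continuous (f i)) -> continuous (fun M => \sum_(i <- r) f i M).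
Proof.
move=> h; elim: r => [|a r IH].
  have -> : (fun M : 'M[R]_n => \sum_(i <- [::]) f i M) = fun _ => 0.
    by rewrite funeqE => M; rewrite big_nil.
  by move=> x; exact: cst_continuous.
have -> : (fun M : 'M[R]_n => \sum_(i <- a :: r) f i M) =
   (f a) + (fun M => \sum_(i <- r) f i M).
  by rewrite funeqE => M; rewrite big_cons.
by move=> x; apply: continuousD; [exact: h | exact: IH].
Qed.

Lemma mxip_cont Y : continuous (fun M : 'M[R]_n => mxip M Y).
Proof.
have -> : (fun M : 'M[R]_n => mxip M Y) =
    (fun M => \sum_(i < n) \sum_(j < n) M i j * Y j i).
  rewrite funeqE => M /=; rewrite /mxip /mxtrace; apply: eq_bigr => i _.
  by rewrite mxE.
apply: cont_sum => i; apply: cont_sum => j.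
move=> x; apply: continuousM; first exact: coord_continuous.
exact: cst_continuous.
Qed.

Lemma line_search N X D : compact N -> SM N X ->
  (forall t : R, 0 <= t <= 1 -> psd (X + t *: D)) ->
  exists t : R, [/\ 0 <= t <= 1, SM N (X + t *: D) &
     (t = 1 \/ exists2 M, N M & mxip M (X + t *: D) = 0)].
Proof.
move=> cN [pX cX] hpsd.
pose T := [set t : R | (0 <= t <= 1) /\ forall M, N M -> 0 <= mxip M X + t * mxip M D].
have T0 : T 0 by split; [rewrite lexx ler01 | move=> M NM; rewrite mul0r addr0 cX].
have Tub : ubound T 1 by move=> t [/andP [_ ?] _].
have hs : has_sup T by split; [exists 0 | exists 1].
pose t0 := sup T.
have t0ge0 : 0 <= t0 by apply: sup_upper_bound.
have t0le1 : t0 <= 1 by apply: ge_sup => //; exists 0.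
have t0T : T t0.
  split; first by rewrite t0ge0 t0le1.
  move=> M NM; have a0 := cX M NM.
  have [b0|b0] := leP 0 (mxip M D); first by rewrite addr_ge0 // mulr_ge0.
  have nb : 0 < - mxip M D by rewrite oppr_gt0.
  have : t0 <= mxip M X / - mxip M D.
    apply: ge_sup; first by exists 0.
    move=> t [_ ht]; rewrite ler_pdivlMr //; have := ht M NM; lra.
  rewrite ler_pdivlMr // => h; lra.
exists t0; split; first by rewrite t0ge0 t0le1.
  split; first by apply: hpsd; rewrite t0ge0 t0le1.
  by move=> M NM; rewrite mxipD mxipZ; case: t0T => _ /(_ M NM).
have [->|t01] := eqVneq t0 1; first by left.
right; have t0lt1 : t0 < 1 by rewrite lt_neqAle t01.
case: (pselect (exists2 M, N M & mxip M (X + t0 *: D) = 0)) => // hno.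
exfalso.
have pos : forall M, N M -> 0 < mxip M X + t0 * mxip M D.
  move=> M NM; rewrite lt_def; case: t0T => _ /(_ M NM) ->; rewrite andbT.
  by apply/eqP => h; apply: hno; exists M => //; rewrite mxipD mxipZ.
case: (pselect (N !=set0)) => [ne|e]; last first.
  have T1 : T 1.
    split; first by rewrite ler01 lexx.
    by move=> M NM; exfalso; apply: e; exists M.
  have := sup_upper_bound hs T1; rewrite -/t0; lra.
have cg : {within N, continuous (fun M : 'M[R]_n => mxip M (X + t0 *: D))}.
  exact/continuous_subspaceT/mxip_cont.
have ch : {within N, continuous (fun M : 'M[R]_n => mxip M D)}.
  exact/continuous_subspaceT/mxip_cont.
have [M0 /[!inE] NM0 hM0] := compact_EVT_min ne cN cg.
have [M1 /[!inE] NM1 hM1] := compact_EVT_min ne cN ch.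
set mu := mxip M0 (X + t0 *: D) in hM0.
set beta := mxip M1 D in hM1.
have mu0 : 0 < mu by rewrite /mu mxipD mxipZ pos.
pose del := Num.min (1 - t0) (mu / (1 + `|beta|)).
have hb : 0 < 1 + `|beta| by rewrite ltr_pwDl.
have del0 : 0 < del by rewrite lt_min subr_gt0 t0lt1 divr_gt0.
have del1 : del <= 1 - t0 by rewrite ge_min lexx.
have del2 : del * (1 + `|beta|) <= mu by rewrite -ler_pdivlMr // ge_min lexx orbT.
have Tt : T (t0 + del).
  split; first by apply/andP; split; lra.
  move=> M NM.
  have g0 : mu <= mxip M X + t0 * mxip M D.
    by have := hM0 M; rewrite inE mxipD mxipZ => /(_ NM).
  have hbM : beta <= mxip M D by have := hM1 M; rewrite inE => /(_ NM).
  have nb : - `|beta| <= beta by rewrite lerNl -normrN ler_norm.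
  have : - `|beta| <= mxip M D by lra.
  have hd0 : 0 <= del by exact: ltW.
  move=> hh.
  have : del * (- `|beta|) <= del * mxip M D by rewrite ler_wpM2l.
  nra.
have := sup_upper_bound hs Tt; rewrite -/t0; lra.
Qed.

End LS.

Section G.
Variables (R : realType) (n : nat).
Implicit Types (X Y A D : 'M[R]_n) (x y v : 'cV[R]_n).
Implicit Types (N : set 'M[R]_n).

Lemma gen_Kgen N : compact N ->
  (forall X, SM N X -> (exists2 M, N M & mxip M X = 0) -> Kgen N X) ->
  forall X, SM N X -> Kgen N X.
Proof.
move=> cN hz X hX.
have [s hs] := psd_decomp hX.1.
have [m hm] : exists m, (size s <= m)%N by exists (size s).
elim: m s X hX hs hm => [|m IH] s X hX hs hm.
  by case: s hs hm => // -> _; rewrite big_nil; exact: Kgen0.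
case: s hs hm => [|v0 [|v1 s']] hs hm.
- by rewrite hs big_nil; exact: Kgen0.
- by rewrite hs big_seq1; apply: Kgen1; move: hX; rewrite hs big_seq1.
set Rr := \sum_(v <- s') rk v.
have eX : X = rk v0 + (rk v1 + Rr) by rewrite hs !big_cons.
pose D := rk v0 - rk v1.
have hp1 : forall t : R, 0 <= t <= 1 -> psd (X + t *: D).
  move=> t /andP [t0 t1].
  have -> : X + t *: D = (1 + t) *: rk v0 + ((1 - t) *: rk v1 + Rr).
    by rewrite eX /D; apply/matrixP => i j; rewrite !mxE; ring.
  apply: psd_add; first by apply: psd_scale; [lra | exact: psd_rk].
  apply: psd_add; first by apply: psd_scale; [lra | exact: psd_rk].
  exact: psd_sum.
have hp2 : forall t : R, 0 <= t <= 1 -> psd (X + t *: (- D)).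
  move=> t /andP [t0 t1].
  have -> : X + t *: (- D) = (1 - t) *: rk v0 + ((1 + t) *: rk v1 + Rr).
    by rewrite eX /D; apply/matrixP => i j; rewrite !mxE; ring.
  apply: psd_add; first by apply: psd_scale; [lra | exact: psd_rk].
  apply: psd_add; first by apply: psd_scale; [lra | exact: psd_rk].
  exact: psd_sum.
have [t1 [/andP [t10 t11] S1 h1]] := line_search cN hX hp1.
have [t2 [/andP [t20 t21] S2 h2]] := line_search cN hX hp2.
have K1 : Kgen N (X + t1 *: D).
  case: h1 => [e1|]; last exact: hz.
  rewrite e1 in S1 *.
  apply: (IH (Num.sqrt 2 *: v0 :: s')) => //.
    rewrite big_cons rkZ -expr2 sqr_sqrtr ?ler0n // -/Rr eX /D.
    by apply/matrixP => i j; rewrite !mxE; ring.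
have K2 : Kgen N (X + t2 *: (- D)).
  case: h2 => [e2|]; last exact: hz.
  rewrite e2 in S2 *.
  apply: (IH (Num.sqrt 2 *: v1 :: s')) => //.
    rewrite big_cons rkZ -expr2 sqr_sqrtr ?ler0n // -/Rr eX /D.
    by apply/matrixP => i j; rewrite !mxE; ring.
have [e0|ne0] := eqVneq (t1 + t2) 0.
  have t1z : t1 = 0 by lra.
  by move: K1; rewrite t1z scale0r addr0.
have -> : X = (t2 / (t1 + t2)) *: (X + t1 *: D) + (t1 / (t1 + t2)) *: (X + t2 *: (- D)).
  by apply/matrixP => i j; rewrite !mxE; field.
apply: Kgen_add; apply: Kgen_scale => //; apply: divr_ge0 => //; lra.
Qed.

Lemma gen_ROG N : compact N ->
  (forall X, SM N X -> (exists2 M, N M & mxip M X = 0) -> Kgen N X) ->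
  ROG (SM N).
Proof.
move=> cN hz; rewrite /ROG; apply/seteqP; split => X; last exact: conv_SM.
by move=> hX; apply: Kgen_conv; apply: gen_Kgen.
Qed.

End G.

Section F.
Variables (R : realType) (n : nat).

Lemma compact_bigcupT k (F : 'I_k -> set 'M[R]_n) :
  (forall i, compact (F i)) -> compact (\bigcup_(j in [set: 'I_k]) F j).
Proof.
move=> cF.
suff h : forall r : seq 'I_k, compact (\bigcup_(j in [set j | j \in r]) F j).
  have -> : \bigcup_(j in [set: 'I_k]) F j = \bigcup_(j in [set j | j \in enum 'I_k]) F j.
    by rewrite predeqE => M; split => -[j _ Fj]; exists j => //=; rewrite mem_enum.
  exact: h.
elim => [|a r IH].
  have -> : \bigcup_(j in [set j | j \in [::]]) F j = set0.
    by rewrite predeqE => M; split => // -[j].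
  exact: compact0.
have -> : \bigcup_(j in [set j | j \in a :: r]) F j =
    F a `|` \bigcup_(j in [set j | j \in r]) F j.
  rewrite predeqE => M; split.
    move=> [j /=]; rewrite inE => /orP [/eqP -> | jr] Fj; [by left | by right; exists j].
  case => [Fa | [j jr Fj]]; first by exists a => //=; rewrite mem_head.
  by exists j => //=; rewrite inE jr orbT.
exact: compactU.
Qed.

Lemma mxip_sum (A : 'M[R]_n) (s : seq 'cV[R]_n) :
  mxip A (\sum_(v <- s) rk v) = \sum_(v <- s) mxip A (rk v).
Proof.
elim: s => [|v s IH]; first by rewrite !big_nil mxip0.
by rewrite !big_cons mxipD IH.
Qed.

End F.

Unset Implicit Arguments.

Theorem lemma2p20 (R : realType) (n k : nat) (Ms : 'I_k -> set 'M[R]_n) :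
  (forall i, Ms i `<=` [set A | symmx A]) ->
  (forall i, compact (Ms i : set 'M[R]_(n, n))) ->
  (forall X : 'M[R]_n, psd X -> X != 0 ->
     forall i : 'I_k, (exists2 Mi, Ms i Mi & mxip Mi X = 0) ->
       forall A, (\bigcup_(j in [set: 'I_k]) Ms j) A -> ~ Ms i A -> 0 < mxip A X) ->
  (ROG (SM (\bigcup_(j in [set: 'I_k]) Ms j)) <-> forall i, ROG (SM (Ms i))).
Proof.
move=> _ cM hyp.
set U := \bigcup_(j in [set: 'I_k]) Ms j.
have cU : compact U by apply: compact_bigcupT.
have subU i : Ms i `<=` U by move=> M h; exists i.
split.
- move=> hU i; apply: gen_ROG (cM i) _ => X hX [M0 M0i z].
  have [->|nz] := eqVneq X 0; first exact: Kgen0.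
  have XU : SM U X.
    split; first exact: hX.1.
    move=> A UA; case: (pselect (Ms i A)) => h; first exact: hX.2.
    by apply: ltW; apply: (hyp X hX.1 nz i _ A UA h); exists M0.
  apply: (Kgen_mono (subU i)); apply: conv_Kgen.
  by move: XU; rewrite {1}hU.
- move=> hi; apply: gen_ROG cU _ => X hX [M0 UM0 z].
  have [i _ M0i] := UM0.
  have Xi : SM (Ms i) X by apply: (SM_mono (subU i)).
  move: Xi; rewrite (hi i) => /conv_Kgen [s [hs eX]].
  exists s; split => // v vs.
  have pv := psd_rk v.
  have zv : mxip M0 (rk v) = 0.
    move: z; rewrite eX mxip_sum big_seq => /eqP.
    rewrite psumr_eq0 => [/allP /(_ v vs)|w ws]; first by rewrite vs /= => /eqP.
    exact: (hs w ws).2.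
  split; first exact: pv.
  move=> A UA; case: (pselect (Ms i A)) => h; first exact: (hs v vs).2.
  have [->|nzv] := eqVneq (rk v) 0; first by rewrite mxip0.
  by apply: ltW; apply: (hyp (rk v) pv nzv i _ A UA h); exists M0.
Qed.
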